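(* Let $n,k\ge 0$ be integers with $n\ge 2k$. For every $\alpha\in F_n(2,k)$ with $\alpha\ne\gamma_{n,k}$, the last word of the list $\mathcal{F}(\alpha)$ is $\gamma_{n,k}=0^{n-2k}(01)^k$.
   Context: The weight of a binary word is its number of 1's. $F_n(2,k)$ is the set of binary words of length $n$ and weight $k$ containing no two consecutive 1's. $\gamma_{n,k}=0^{n-2k}(01)^k$. A homogeneous transposition of a binary word exchanges a 1 and a 0 such that no 1 occurs strictly between the two exchanged positions. For a set $S$ of binary words of the same length and weight and $\alpha\in S$, the list obtained by applying the greedy algorithm for $S$ to $\alpha$ is built as follows: start with the list $(\alpha)$; repeatedly, for the last word $w$ of the current list, among all words obtainable from $w$ by one homogeneous transposition that lie in $S$ and do not already occur in the list, choose the one obtained by transposing the leftmost possible 1 with (among transpositions of that 1) the leftmost possible 0, and append it; stop when no such word exists. $\mathcal{F}(\alpha)$ denotes the list obtained by applying the greedy algorithm for $F_n(2,k)$ to $\alpha\in F_n(2,k)$. *)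

(* Defs.v *)
(* Binary words are [seq bool] (true = 1, false = 0). *)
From mathcomp Require Import all_boot.
Set Implicit Arguments. Unset Strict Implicit. Unset Printing Implicit Defensive.

Definition word := seq bool.

Definition weight (w : word) : nat := count id w.

Definition no11 (w : word) : bool :=
  all (fun p => ~~ (nth false w p && nth false w p.+1)) (iota 0 (size w).-1).

Definition inF (n k : nat) (w : word) : bool :=
  [&& size w == n, weight w == k & no11 w].

Definition gamma (n k : nat) : word :=
  nseq (n - 2 * k) false ++ flatten (nseq k [:: false; true]).

Definition no1_between (w : word) (i j : nat) : bool :=
  all (fun p => ~~ nth false w p) (iota (minn i j).+1 ((maxn i j - minn i j).-1)).

Definition swap10 (w : word) (i j : nat) : word :=
  set_nth false (set_nth false w i false) j true.

(* all words obtained from w by one homogeneous transposition, listed in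
   lexicographic order of (position of the transposed 1, position of the 0) *)
Definition htrans (w : word) : seq word :=
  flatten [seq [seq swap10 w i j | j <- iota 0 (size w) &
                 ~~ nth false w j && no1_between w i j]
          | i <- iota 0 (size w) & nth false w i].

(* one step of the greedy algorithm for S on the current list L (nonempty,
   represented as head a0 and tail L) *)
Definition greedy_step (S : pred word) (a0 : word) (L : seq word) : seq word :=
  let w := last a0 L in
  match [seq c <- htrans w | S c & c \notin a0 :: L] with
  | c :: _ => rcons L c
  | [::] => L
  end.

(* All words in the list are distinct and of length size alpha, so the
   algorithm stops after fewer than 2^(size alpha) appended words; iterating
   the step 2^(size alpha) times therefore reaches the stopping point
   (the step is the identity once no word can be appended). *)
Definition greedy (S : pred word) (alpha : word) : seq word :=
  alpha :: iter (2 ^ size alpha) (greedy_step S alpha) [::].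

Definition calF (n k : nat) (alpha : word) : seq word := greedy (inF n k) alpha.

(* Main.v *)
Require Import Defs.
From mathcomp Require Import all_boot zify.
From Stdlib Require Import Classical.
Set Implicit Arguments. Unset Strict Implicit. Unset Printing Implicit Defensive.



Lemma nth_swap10 w i j p :
  nth false (swap10 w i j) p =
  if p == j then true else if p == i then false else nth false w p.
Proof. by rewrite /swap10 nth_set_nth /= nth_set_nth. Qed.

Lemma size_swap10 w i j : i < size w -> j < size w -> size (swap10 w i j) = size w.
Proof.
move=> Hi Hj; rewrite /swap10 !size_set_nth.
have -> : maxn i.+1 (size w) = size w by apply/maxn_idPr.
by apply/maxn_idPr.
Qed.

Lemma weight_swap10 w i j : i < size w -> j < size w ->
  nth false w i -> ~~ nth false w j -> weight (swap10 w i j) = weight w.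
Proof.
move=> Hi Hj wi wj; rewrite /weight /swap10.
rewrite count_set_nthF // count_set_nthF // nth_set_nth /=.
have ij : (j == i) = false by apply/negbTE; apply/eqP=> E; subst; rewrite wi in wj.
rewrite ij (negbTE wj) wi /=.
have : 0 < count id w.
  by rewrite -has_count; apply/hasP; exists (nth false w i) => //; apply: mem_nth.
lia.
Qed.

Lemma no11P w : reflect (forall p, ~~ (nth false w p && nth false w p.+1)) (no11 w).
Proof.
apply: (iffP allP) => H p.
  case: (ltnP p (size w).-1) => Hp.
    by apply: H; rewrite mem_iota.
  by rewrite (nth_default _ (_ : size w <= p.+1)) ?andbF //; lia.
by move=> _; apply: H.
Qed.

Lemma no1_betweenP w i j : i < j ->
  reflect (forall p, i < p < j -> ~~ nth false w p) (no1_between w i j).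
Proof.
move=> ij; rewrite /no1_between.
have -> : minn i j = i by apply/minn_idPl; lia.
have -> : maxn i j = j by apply/maxn_idPr; lia.
apply: (iffP allP) => H p Hp.
  by apply: H; rewrite mem_iota; lia.
by apply: H; move: Hp; rewrite mem_iota; lia.
Qed.

Lemma no1_betweenC w i j : no1_between w i j = no1_between w j i.
Proof. by rewrite /no1_between minnC maxnC. Qed.

Definition T (r : nat) (w : word) : Prop :=
  2 * r <= size w /\ forall p, size w - 2 * r <= p < size w -> nth false w p = odd (size w - p).

Lemma T_down r w : T r.+1 w -> T r w.
Proof. move=> [H1 H2]; split; first lia. move=> p Hp; apply: H2; lia. Qed.

Lemma T_le r s w : r <= s -> T s w -> T r w.
Proof.
move=> /subnK <-; elim: (s - r) => [|d IH] //= H; apply: IH; exact: T_down.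
Qed.

Lemma T0 w : T 0 w.
Proof. split; first lia. move=> p; lia. Qed.

Definition flat01 r : word := flatten (nseq r [:: false; true]).

Lemma size_flat01 r : size (flat01 r) = 2 * r.
Proof. elim: r => //= r IH; rewrite /flat01 /= in IH *; rewrite IH; lia. Qed.

Lemma nth_flat01 r q : nth false (flat01 r) q = (q < 2 * r) && odd q.
Proof.
elim: r q => [|r IH] q; first by rewrite /flat01 /= nth_nil; lia.
rewrite /flat01 /= -/(flat01 r).
case: q => [|[|q]] //=; first lia. rewrite IH negbK. case: (odd q); lia.
Qed.

Lemma count_flat01 r : count id (flat01 r) = r.
Proof. elim: r => //= r IH; rewrite /flat01 /= -/(flat01 r) IH; lia. Qed.

Lemma T_drop r w : T r w -> drop (size w - 2 * r) w = flat01 r.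
Proof.
move=> [H1 H2]; apply: (@eq_from_nth _ false); first by rewrite size_drop size_flat01; lia.
move=> q; rewrite size_drop => Hq; rewrite nth_drop nth_flat01 H2; last lia.
have -> : q < 2 * r by lia.
rewrite andTb; lia.
Qed.

Lemma size_gamma n k : 2 * k <= n -> size (gamma n k) = n.
Proof. move=> H; rewrite /gamma size_cat size_nseq -/(flat01 k) size_flat01; lia. Qed.

Lemma nth_gamma n k p : 2 * k <= n ->
  nth false (gamma n k) p = (n - 2 * k <= p < n) && odd (n - p).
Proof.
move=> H; rewrite /gamma -/(flat01 k) nth_cat size_nseq.
case: ltnP => Hp; first by rewrite nth_nseq if_same; lia.
rewrite nth_flat01.
case: (ltnP p n) => Hpn /=.
  have -> : p - (n - 2 * k) < 2 * k by lia.
  rewrite andTb; lia.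
have -> : p - (n - 2 * k) < 2 * k = false by lia. done.
Qed.

Lemma T_gamma n k w : 2 * k <= n -> size w = n -> weight w = k -> T k w -> w = gamma n k.
Proof.
move=> H sw ww Tw.
rewrite -(cat_take_drop (n - 2 * k) w) /gamma -/(flat01 k) -{2}sw T_drop //.
congr (_ ++ _).
have c0 : count id (take (n - 2 * k) w) = 0.
  have E : count id w = count id (take (n - 2 * k) w) + count id (drop (n - 2 * k) w)
    by rewrite -count_cat cat_take_drop.
  have D := T_drop Tw; rewrite sw in D.
  move: ww E; rewrite /weight D count_flat01; lia.
have st : size (take (n - 2 * k) w) = n - 2 * k by rewrite size_takel //; lia.
rewrite -{2}st; move: c0; elim: (take _ _) => //= b s IH; case: b => //= c; by rewrite -IH.
Qed.

Definition blk (w : word) i :=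
  [seq swap10 w i j | j <- iota 0 (size w) & ~~ nth false w j && no1_between w i j].

Lemma htransE w : htrans w = flatten [seq blk w i | i <- iota 0 (size w) & nth false w i].
Proof. by []. Qed.

Lemma mem_flat_blk w s x :
  x \in flatten [seq blk w i | i <- s & nth false w i] <->
  exists i j, [/\ i \in s, nth false w i, j < size w, ~~ nth false w j &
                  no1_between w i j /\ x = swap10 w i j].
Proof.
split.
  move/flattenP => [l /mapP [i Hi ->] /mapP [j Hj ->]].
  move: Hi Hj; rewrite !mem_filter mem_iota => /andP [wi iS] /andP [/andP [wj nb] jr].
  by exists i, j; split => //; lia.
move=> [i [j [iS wi js wj [nb ->]]]].
apply/flattenP; exists (blk w i).
  by apply/mapP; exists i; rewrite // mem_filter wi.
by apply/mapP; exists j; rewrite // mem_filter wj nb mem_iota; apply/andP; split => //; lia.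
Qed.

Lemma filter_head_cat (P : pred word) A B u : u \in A -> P u ->
  exists x s, filter P (A ++ B) = x :: s /\ x \in A /\ P x.
Proof.
move=> uA Pu; rewrite filter_cat.
have : u \in filter P A by rewrite mem_filter Pu.
case E: (filter P A) => [|x s] // _.
exists x, (s ++ filter P B); split => //.
have : x \in filter P A by rewrite E mem_head.
by rewrite mem_filter => /andP [].
Qed.

Lemma filter_before (P : pred word) l1 x l2 s y :
  filter P (l1 ++ x :: l2) = x :: s -> x \notin l1 -> y \in l1 -> ~~ P y.
Proof.
rewrite filter_cat; case E: (filter P l1) => [|z t].
  move=> _ _ yl; apply/negP => py.
  have : y \in filter P l1 by rewrite mem_filter py.
  by rewrite E.
move=> [zx _] xl; have : z \in filter P l1 by rewrite E mem_head.
by rewrite mem_filter zx (negbTE xl) andbF.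
Qed.

Lemma filter_nil_all (P : pred nat) s : (forall x, x \in s -> ~~ P x) -> filter P s = [::].
Proof.
elim: s => //= a s IH H; rewrite (negbTE (H a (mem_head _ _))) IH //.
by move=> x xs; apply: H; rewrite inE xs orbT.
Qed.

Lemma ex_last_step (P : nat -> Prop) N : P 0 -> ~ P N -> exists r, P r /\ ~ P r.+1.
Proof.
elim: N => [|N IH] H0 HN; first by [].
case: (classic (P N)) => HPN; first by exists N.
exact: IH.
Qed.

Lemma ex_last_true (P : pred nat) N : (exists p, p < N /\ P p) ->
  exists q, [/\ q < N, P q & forall p, q < p < N -> ~~ P p].
Proof.
elim: N => [|N IH] [p [pN Pp]]; first by [].
case PN: (P N).
  by exists N; split => // p' H; lia.
have pN' : p < N by case: (ltngtP p N) => // E; [lia | by subst; rewrite PN in Pp].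
have [q [qN Pq H]] := IH (ex_intro _ p (conj pN' Pp)).
exists q; split => //; first lia.
move=> p' Hp'; case: (ltngtP p' N) => E.
- by apply: H; lia.
- lia.
- by subst; rewrite PN.
Qed.

Lemma inF_props n k w : inF n k w ->
  [/\ size w = n, weight w = k & forall p, ~~ (nth false w p && nth false w p.+1)].
Proof.
by move=> /and3P [/eqP -> /eqP -> /no11P H].
Qed.

Lemma inF_intro n k w : size w = n -> weight w = k ->
  (forall p, ~~ (nth false w p && nth false w p.+1)) -> inF n k w.
Proof. by move=> s w' H; rewrite /inF s w' !eqxx /=; apply/no11P. Qed.

Lemma key n k c r : 2 * k <= n -> inF n k c -> c <> gamma n k -> T r c -> ~ T r.+1 c ->
  exists u A B, [/\ htrans c = A ++ B, u \in A, inF n k u, T r.+1 u &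
     forall x, x \in A -> inF n k x -> T r x].
Proof.
move=> Hkn Fc Hcg Tr nTr.
have [sc wc nc] := inF_props Fc.
have rk : r < k.
  case: (ltnP r k) => // kr; exfalso; apply: Hcg.
  by apply: T_gamma => //; apply: T_le Tr.
have r2 : 2 * r.+1 <= n by lia.
have Tr' := Tr; case: Tr' => _ Trp; rewrite sc in Trp.
have cj : nth false c (n - 2 * r - 1) = false.
  apply/negP => cj; apply: nTr; split; first by rewrite sc; lia.
  rewrite sc => p Hp.
  case: (leqP (n - 2 * r) p) => Hp2; first by apply: Trp; lia.
  case: (eqVneq p (n - 2 * r - 1)) => [->|pne].
    by rewrite cj; lia.
  have -> : p = n - 2 * r - 2 by lia.
  have := nc (n - 2 * r - 2); rewrite (_ : (n - 2 * r - 2).+1 = n - 2 * r - 1); last lia.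
  by rewrite cj andbT => /negbTE ->; lia.
have cn : nth false c (n - 2 * r) = false.
  case: r {rk nTr Trp cj} => [|r'] in Tr r2 *.
    by rewrite subn0 nth_default // sc.
  case: Tr => _ H; rewrite H sc; try lia.
have exq : exists p, p < n - 2 * r /\ nth false c p.
  case Hh: (has (nth false c) (iota 0 (n - 2 * r))).
    by move/hasP: Hh => [p]; rewrite mem_iota => Hp cp; exists p; split => //; lia.
  exfalso.
  have tk : take (n - 2 * r) c = nseq (n - 2 * r) false.
    apply: (@eq_from_nth _ false); first by rewrite size_nseq size_takel // sc; lia.
    move=> p; rewrite size_takel ?sc; last lia.
    move=> Hp; rewrite nth_take // nth_nseq Hp.
    apply/negbTE; move/hasPn: Hh; apply; rewrite mem_iota; lia.
  have E : count id c = count id (take (n - 2 * r) c) + count id (drop (n - 2 * r) c)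
    by rewrite -count_cat cat_take_drop.
  have D := T_drop Tr; rewrite sc in D.
  move: E; rewrite tk D count_nseq count_flat01 /=; move: wc; rewrite /weight; lia.
have [q [qn cq qmax]] := ex_last_true exq.
have qj : q < n - 2 * r - 1.
  case: (ltngtP q (n - 2 * r - 1)) => // E; first lia.
  by rewrite E cj in cq.
set j := n - 2 * r - 1.
set u := swap10 c q j.
have su : size u = n by rewrite /u size_swap10 sc //; lia.
have nu : forall p, nth false u p = if p == j then true else if p == q then false else nth false c p.
  by move=> p; rewrite /u nth_swap10.
exists u, (flatten [seq blk c i | i <- iota 0 q.+1 & nth false c i]),
          (flatten [seq blk c i | i <- iota q.+1 (n - q.+1) & nth false c i]).
split.
- rewrite htransE sc -{1}(subnKC (_ : q.+1 <= n)); last lia.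
  by rewrite iotaD filter_cat map_cat flatten_cat.
- apply/mem_flat_blk; exists q, j; split => //; first by rewrite mem_iota; lia.
  + by rewrite sc /j; lia.
  + by rewrite cj.
  + split => //; apply/no1_betweenP => // p Hp; apply: qmax; rewrite /j in Hp; lia.
- apply: inF_intro => //.
    by rewrite /u weight_swap10 ?sc // ?cj //; lia.
  move=> p; rewrite !nu.
  case: (eqVneq p j) => [pj|pj].
    have -> : (p.+1 == j) = false by apply/eqP; lia.
    have -> : (p.+1 == q) = false by apply/eqP; lia.
    by rewrite pj (_ : j.+1 = n - 2 * r) ?cn //; rewrite /j; lia.
  case: (eqVneq p.+1 j) => [pj1|pj1].
    case: (eqVneq p q) => // pq.
    rewrite andbT; apply: qmax; rewrite /j in pj1; lia.
  case: (eqVneq p q) => // pq; case: (eqVneq p.+1 q) => [_|pq1]; first by rewrite andbF.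
  exact: nc.
- split; first by rewrite su; lia.
  rewrite su => p Hp; rewrite nu.
  case: (eqVneq p j) => [->|pj]; first by rewrite /j; lia.
  case: (eqVneq p q) => [pq|pq].
    have pe : p = n - 2 * r - 2 by rewrite /j in pj; lia.
    rewrite pe; lia.
  case: (leqP (n - 2 * r) p) => Hp2; first by apply: Trp; lia.
  have pe : p = n - 2 * r - 2 by rewrite /j in pj; lia.
  rewrite (negbTE (qmax p _)); last lia.
  rewrite pe; lia.
- move=> x /mem_flat_blk [i [j' [iS ci j'n cj' [nb ->]]]] Fx.
  have [sx _ nx] := inF_props Fx.
  rewrite mem_iota in iS.
  have iq : i <= q by lia.
  have j'r : j' < n - 2 * r.
    case: (ltnP j' (n - 2 * r)) => // Hj'.
    case: r {rk nTr cj cn exq qj qmax j u su nu} => [|r'] in Tr Trp Hj' r2 qn *; first by rewrite sc in j'n; lia.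
    have c1 : nth false c (n - 2 * r'.+1 + 1) = true by rewrite Trp; lia.
    have ij' : i < j' by lia.
    move/(no1_betweenP _ ij'): nb => nb.
    case: (ltngtP j' (n - 2 * r'.+1 + 1)) => E.
    + have E2 : j' = n - 2 * r'.+1 by lia.
      subst j'; exfalso; move: (nx (n - 2 * r'.+1)); rewrite !nth_swap10 eqxx /=.
      have -> : ((n - 2 * r'.+1).+1 == n - 2 * r'.+1) = false by apply/eqP; lia.
      have -> : ((n - 2 * r'.+1).+1 == i) = false by apply/eqP; lia.
      by rewrite (_ : (n - 2 * r'.+1).+1 = n - 2 * r'.+1 + 1) ?c1 //; lia.
    + by move: (nb (n - 2 * r'.+1 + 1)); rewrite c1; apply; lia.
    + by rewrite E c1 in cj'.
  split; first by rewrite sx; lia.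
  rewrite sx => p Hp; rewrite nth_swap10.
  have -> : (p == j') = false by apply/eqP; lia.
  have -> : (p == i) = false by apply/eqP; lia.
  exact: Trp.
Qed.

Lemma gamma_nbrs n k y : 2 * k <= n -> y \in htrans (gamma n k) -> inF n k y ->
  exists j, [/\ n - 2 * k + 1 < n, j < n - 2 * k + 1 & y = swap10 (gamma n k) (n - 2 * k + 1) j].
Proof.
move=> H; rewrite htransE => /mem_flat_blk [i [j [iS gi jn gj [nb ->]]]] Fy.
rewrite size_gamma // in jn.
have [_ _ ny] := inF_props Fy.
have ng := nth_gamma _ H.
have gi' := gi; rewrite ng in gi'.
move/andP: (gi') => [/andP [gi1 gin] gio].
have gj' := gj; rewrite ng in gj'.
have nsw : forall p, nth false (swap10 (gamma n k) i j) p =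
   if p == j then true else if p == i then false else (n - 2 * k <= p < n) && odd (n - p).
  by move=> p; rewrite nth_swap10 ng.
case: (ltngtP i j) => ij.
- exfalso; move/(no1_betweenP _ ij): nb => nb.
  have i2 : i.+2 < n by lia.
  have gi2 : nth false (gamma n k) i.+2 by rewrite ng; lia.
  case: (ltngtP j i.+2) => E.
  + have ej : j = i.+1 by lia.
    move: (ny i.+1); rewrite !nsw.
    have -> : (i.+1 == j) by apply/eqP.
    have -> : (i.+2 == j) = false by apply/eqP; lia.
    have -> : (i.+2 == i) = false by apply/eqP; lia.
    rewrite /=; lia.
  + suff : ~~ nth false (gamma n k) i.+2 by rewrite gi2.
    apply: nb; lia.
  + by rewrite E gi2 in gj.
- rewrite no1_betweenC in nb; move/(no1_betweenP _ ij): nb => nb.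
  case: (eqVneq i (n - 2 * k + 1)) => [ei|ni].
    by exists j; split => //; [lia | lia | rewrite ei].
  exfalso.
  have i2 : n - 2 * k + 3 <= i by lia.
  have gi2 : nth false (gamma n k) i.-2 by rewrite ng; lia.
  case: (ltngtP j i.-2) => E.
  + suff : ~~ nth false (gamma n k) i.-2 by rewrite gi2.
    apply: nb; lia.
  + have ej : j = i.-1 by lia.
    move: (ny i.-2); rewrite !nsw.
    have -> : (i.-2 == j) = false by apply/eqP; lia.
    have -> : (i.-2 == i) = false by apply/eqP; lia.
    have -> : (i.-2.+1 == j) by apply/eqP; lia.
    rewrite /=; lia.
  + by rewrite E gi2 in gj.
- by subst; rewrite gi in gj.
Qed.

Lemma htrans_sym c i j : i < size c -> j < size c -> nth false c i -> ~~ nth false c j ->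
  no1_between c i j -> c \in htrans (swap10 c i j).
Proof.
move=> iS jS ci cj nb.
have ij : i != j by apply/eqP => E; subst; rewrite ci in cj.
have sg := size_swap10 iS jS.
rewrite htransE; apply/mem_flat_blk; exists j, i; split.
- by rewrite mem_iota sg; lia.
- by rewrite nth_swap10 eqxx.
- by rewrite sg.
- by rewrite nth_swap10 (negbTE ij) eqxx.
- split.
    case: (ltngtP i j) => E.
    + rewrite no1_betweenC; apply/no1_betweenP => // p Hp.
      have pj : (p == j) = false by apply/eqP; lia.
      have pi : (p == i) = false by apply/eqP; lia.
      rewrite nth_swap10 pj pi.
      by move/(no1_betweenP _ E): nb; apply.
    + apply/no1_betweenP => // p Hp.
      have pj : (p == j) = false by apply/eqP; lia.
      have pi : (p == i) = false by apply/eqP; lia.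
      rewrite nth_swap10 pj pi.
      by rewrite no1_betweenC in nb; move/(no1_betweenP _ E): nb; apply.
    + by rewrite E eqxx in ij.
  apply: (@eq_from_nth _ false); first by rewrite size_swap10 sg.
  move=> p _; rewrite !nth_swap10.
  case: (eqVneq p i) => [->|pi]; first by [].
  case: (eqVneq p j) => [->|pj]; first by apply/negbTE.
  by [].
Qed.

Lemma iota_split m n : m < n -> iota 0 n = iota 0 m ++ m :: iota m.+1 (n - m.+1).
Proof.
move=> H; rewrite -[n in iota 0 n](subnKC (ltnW H)) iotaD add0n.
by rewrite -subnSK.
Qed.

Lemma decomp n k v j : 2 * k <= n -> n - 2 * k + 1 < n -> v < n - 2 * k + 1 ->
  j < n - 2 * k + 1 -> j != v ->
  exists l1 l2, [/\ htrans (swap10 (gamma n k) (n - 2 * k + 1) v) = l1 ++ gamma n k :: l2,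
                    gamma n k \notin l1 & swap10 (gamma n k) (n - 2 * k + 1) j \in l1].
Proof.
move=> H tn vt jt jv.
set t := n - 2 * k + 1 in tn vt jt *.
set g := gamma n k.
set f := swap10 g t v.
have sg : size g = n by rewrite size_gamma.
have sf : size f = n by rewrite /f size_swap10 // sg; lia.
have gz : forall p, p < t -> nth false g p = false by move=> p Hp; rewrite nth_gamma //; lia.
have gt : nth false g t by rewrite nth_gamma //; lia.
have nf : forall p, nth false f p = if p == v then true else if p == t then false else nth false g p.
  by move=> p; rewrite /f nth_swap10.
have fz : forall p, p < t -> p != v -> nth false f p = false.
  move=> p Hp pv; have pt : (p == t) = false by apply/eqP; lia.
  by rewrite nf (negbTE pv) pt gz.
have tv : (t == v) = false by apply/eqP; lia.
have ft : nth false f t = false by rewrite nf tv eqxx.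
have fv : nth false f v by rewrite nf eqxx.
have Qt : ~~ nth false f t && no1_between f v t.
  rewrite ft /=; apply/no1_betweenP => // p Hp; rewrite fz //; apply/eqP; lia.
have ft_g : swap10 f v t = g.
  apply: (@eq_from_nth _ false); first by rewrite size_swap10 ?sf ?sg //; lia.
  move=> p _; rewrite nth_swap10 nf.
  case: (eqVneq p t) => [->|pt]; first by rewrite gt.
  case: (eqVneq p v) => [->|pv] //; by rewrite gz.
set Q := fun j0 => ~~ nth false f j0 && no1_between f v j0.
exists [seq swap10 f v j0 | j0 <- iota 0 t & Q j0],
       ([seq swap10 f v j0 | j0 <- iota t.+1 (n - t.+1) & Q j0] ++
       flatten [seq blk f i | i <- iota v.+1 (n - v.+1) & nth false f i]).
split.
- rewrite htransE sf (iota_split (_ : v < n)); last lia.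
  rewrite filter_cat filter_nil_all; last first.
    by move=> p; rewrite mem_iota => Hp; rewrite fz //; [lia | apply/eqP; lia].
  rewrite /= fv /= /blk sf (iota_split tn) filter_cat map_cat /=.
  by rewrite Qt /= ft_g -catA.
- apply/negP => /mapP [j0]; rewrite mem_filter mem_iota => /andP [_ Hj0] E.
  have := gt; rewrite E nth_swap10.
  have tj : (t == j0) = false by apply/eqP; lia.
  by rewrite tj tv ft.
- apply/mapP; exists j.
    rewrite mem_filter mem_iota; apply/andP; split; last lia.
    rewrite /Q fz //=.
    case: (ltngtP v j) => E.
    + apply/no1_betweenP => // p Hp; rewrite fz //; [lia | apply/eqP; lia].
    + rewrite no1_betweenC; apply/no1_betweenP => // p Hp; rewrite fz //; [lia | apply/eqP; lia].
    + by rewrite E eqxx in jv.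
  apply: (@eq_from_nth _ false); first by rewrite !size_swap10 ?sf ?sg //; lia.
  move=> p _; rewrite !nth_swap10.
  case: (eqVneq p j) => // pj.
  case: (eqVneq p v) => [->|pv].
    by rewrite eq_sym tv gz.
  by [].
Qed.

Lemma arrival n k c (Lst : seq word) s : 2 * k <= n -> inF n k c -> c \in Lst ->
  filter (fun x => inF n k x && (x \notin Lst)) (htrans c) = gamma n k :: s ->
  forall y, y \in htrans (gamma n k) -> inF n k y -> y \in Lst.
Proof.
move=> H Fc cL E y yh Fy.
have gh : gamma n k \in htrans c.
  have : gamma n k \in filter (fun x => inF n k x && (x \notin Lst)) (htrans c) by rewrite E mem_head.
  by rewrite mem_filter => /andP [].
have ch : c \in htrans (gamma n k).
  move: gh; rewrite htransE => /mem_flat_blk [i [j [iS ci jS cj [nb ->]]]].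
  by apply: htrans_sym => //; move: iS; rewrite mem_iota.
have [v [tn vt cE]] := gamma_nbrs H ch Fc.
have [j [_ jt yE]] := gamma_nbrs H yh Fy.
case: (eqVneq j v) => [ejv|jv]; first by rewrite yE ejv -cE.
have [l1 [l2 [hE gl1 jl1]]] := decomp H tn vt jt jv.
rewrite cE hE in E.
rewrite -yE in jl1.
have := filter_before E gl1 jl1.
by rewrite Fy /= negbK.
Qed.

Lemma filter_nil_all' (T0 : eqType) (P : pred T0) s : (forall x, x \in s -> ~~ P x) -> filter P s = [::].
Proof.
elim: s => //= a s IH H; rewrite (negbTE (H a (mem_head _ _))) IH //.
by move=> x xs; apply: H; rewrite inE xs orbT.
Qed.

Definition Inv n k (a : word) (L : seq word) : Prop :=
  [/\ all (inF n k) (a :: L), uniq (a :: L),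
      (forall x r, x \in a :: L -> T r x -> T r (last a L)) &
      (last a L = gamma n k -> forall y, y \in htrans (gamma n k) -> inF n k y -> y \in a :: L)].

Lemma step_lemma n k a L : 2 * k <= n -> Inv n k a L ->
  [/\ Inv n k a (greedy_step (inF n k) a L),
      (last a L = gamma n k -> greedy_step (inF n k) a L = L) &
      (last a L <> gamma n k -> size (greedy_step (inF n k) a L) = (size L).+1)].
Proof.
move=> H [Fa U Tm G].
have Fc : inF n k (last a L) := allP Fa _ (mem_last a L).
have [cg|cg] := eqVneq (last a L) (gamma n k).
  have stepE : greedy_step (inF n k) a L = L.
    rewrite /greedy_step filter_nil_all' //.
    move=> y yh; rewrite negb_and negbK; apply/orP.
    case Fy: (inF n k y); last by left.
    by right; apply: G => //; rewrite -cg.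
  by split => //; rewrite stepE.
have [sc _ _] := inF_props Fc.
have [r [Tr nTr]] : exists r, T r (last a L) /\ ~ T r.+1 (last a L).
  apply: (ex_last_step (N := (size (last a L)).+1)); first exact: T0.
  by move=> [H1 _]; lia.
have [u [A [B [hAB uA Fu Tu HA]]]] := key H Fc (elimN eqP cg) Tr nTr.
have Pu : inF n k u && (u \notin a :: L).
  rewrite Fu /=; apply/negP => uL; apply: nTr; exact: Tm uL Tu.
have [x [s [E [xA Px]]]] := @filter_head_cat (fun x => inF n k x && (x \notin a :: L)) A B u uA Pu.
have stepE : greedy_step (inF n k) a L = rcons L x.
  by rewrite /greedy_step hAB E.
rewrite stepE; move/andP: Px => [Fx xL].
split.
- split.
  + by rewrite -rcons_cons all_rcons Fx.
  + by rewrite -rcons_cons rcons_uniq xL U.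
  + move=> x' r'; rewrite last_rcons -rcons_cons mem_rcons inE => /orP [/eqP ->|xL'] // Tx'.
    have Tc := Tm _ _ xL' Tx'.
    have r'r : r' <= r by case: (leqP r' r) => // rr'; exfalso; apply: nTr; exact: T_le Tc.
    exact: T_le r'r (HA x xA Fx).
  + rewrite last_rcons => xg y yh Fy.
    rewrite -rcons_cons mem_rcons inE; apply/orP; right.
    rewrite -hAB xg in E.
    exact: arrival H Fc (mem_last a L) E y yh Fy.
- by move=> E2; rewrite E2 eqxx in cg.
- by rewrite size_rcons.
Qed.

Lemma uniq_words_bound n (s : seq word) : uniq s -> all (fun w => size w == n) s -> size s <= 2 ^ n.
Proof.
move=> U A.
pose d : n.-tuple bool := [tuple of nseq n false].
pose t := map (insubd d) s.
have vt : map val t = s.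
  rewrite /t -map_comp -[RHS]map_id; apply/eq_in_map => w ws /=.
  by rewrite insubdK //; exact: (allP A).
have Ut : uniq t by rewrite -(map_inj_uniq val_inj) vt.
have <- : size t = size s by rewrite size_map.
rewrite -(card_uniqP Ut).
apply: leq_trans (max_card _) _.
by rewrite card_tuple card_bool.
Qed.

Theorem lemma1 (n k : nat) (alpha : word) :
  2 * k <= n -> inF n k alpha -> alpha != gamma n k ->
  last alpha (calF n k alpha) = gamma n k.
Proof.
move=> H Fa ag.
rewrite /calF /greedy /=.
have [sa _ _] := inF_props Fa.
have claim : forall t, Inv n k alpha (iter t (greedy_step (inF n k) alpha) [::]) /\
   (last alpha (iter t (greedy_step (inF n k) alpha) [::]) = gamma n k \/
    size (iter t (greedy_step (inF n k) alpha) [::]) = t).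
  elim => [|t [I D]].
    split; last by right.
    split => //=; first by rewrite Fa.
    - by move=> x r; rewrite inE => /eqP ->.
    - by move=> E; rewrite E eqxx in ag.
  have [I' S1 S2] := step_lemma H I.
  rewrite /=; split => //.
  case: D => [D|D].
    by left; rewrite S1.
  case: (eqVneq (last alpha (iter t (greedy_step (inF n k) alpha) [::])) (gamma n k)) => [E|E].
    by left; rewrite S1.
  by right; rewrite S2 ?D //; apply/eqP.
have [[Fa' U _ _] [//|D]] := claim (2 ^ size alpha).
exfalso.
have Hall : all (fun w => size w == n) (alpha :: iter (2 ^ size alpha) (greedy_step (inF n k) alpha) [::]).
  by apply/allP => w /(allP Fa') /inF_props [-> _ _].
have := uniq_words_bound U Hall.
by rewrite /= D sa ltnn.
Qed.
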